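(* Consider the following one-step ($n=1$) scenario with two players. There is a single initial state (''cake''); the observation $O_1\in\{\text{red},\text{green}\}$, where player 1 believes $\mathbb P^1(\text{red})=0.9$, $\mathbb P^1(\text{green})=0.1$ and player 2 believes $\mathbb P^2(\text{red})=0.1$, $\mathbb P^2(\text{green})=0.9$. The action $A_1\in\{(\text{all},\text{none}),(\text{half},\text{half}),(\text{none},\text{all})\}$ determines the outcome, with utilities $U^1=30,20,0$ and $U^2=0,20,30$ respectively for these three actions (regardless of the observation). A policy $\pi$ assigns to each $o_1\in\{\text{red},\text{green}\}$ a distribution $\pi(\cdot\mid o_1)$ on the three actions; $\mathbb E^j[U^j;\pi]=\sum_{o_1}\mathbb P^j(o_1)\sum_{a}\pi(a\mid o_1)U^j(a)$, and for a distribution $\alpha$ on actions $\mathbb E^j[U^j\mid o_1;a_1\sim\alpha]=\sum_a\alpha(a)U^j(a)$. Let $\hat\pi$ be the policy with $\hat\pi(\cdot\mid\text{red})=100\%\,(\text{all},\text{none})$ and $\hat\pi(\cdot\mid\text{green})=100\%\,(\text{none},\text{all})$. Then $\hat\pi$ is not equal to any policy $\pi$ satisfying, for some fixed $r\in[0,1]$ and all $o_1$, \[ \pi(\cdot\mid o_1)\in\arg\max_{\alpha}\Big(r\,\mathbb E^1[U^1\mid o_1;a_1\sim\alpha]+(1-r)\,\mathbb E^2[U^2\mid o_1;a_1\sim\alpha]\Big), \] where the maximum ranges over distributions $\alpha$ on the three actions. Moreover, every such policy $\pi$ satisfies $\mathbb E^1[U^1;\pi]<\mathbb E^1[U^1;\hat\pi]$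 or $\mathbb E^2[U^2;\pi]<\mathbb E^2[U^2;\hat\pi]$.
   Context: Here $\mathbb P^j$ and $U^j$ denote player $j$'s beliefs and utility function; the machine's policy maps its observation to a (possibly randomized) action. (In this scenario $\mathbb E^1[U^1;\hat\pi]=\mathbb E^2[U^2;\hat\pi]=27$.) *)

(* Defs.v *)
From HB Require Import structures.
From mathcomp Require Import all_boot all_order all_algebra.
Set Implicit Arguments. Unset Strict Implicit. Unset Printing Implicit Defensive.
Import Order.TTheory GRing.Theory Num.Theory.
Local Open Scope ring_scope.

Inductive obs := red | green.
Definition obs_to_bool (o : obs) : bool := if o is red then true else false.
Definition bool_to_obs (b : bool) : obs := if b then red else green.
Lemma obs_boolK : cancel obs_to_bool bool_to_obs. Proof. by case. Qed.
HB.instance Definition _ := Finite.copy obs (can_type obs_boolK).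

Inductive action := all_none | half_half | none_all.
Definition action_to_ord (a : action) : 'I_3 :=
  match a with all_none => @Ordinal 3 0 isT | half_half => @Ordinal 3 1 isT | none_all => @Ordinal 3 2 isT end.
Definition ord_to_action (i : 'I_3) : action :=
  match val i with 0 => all_none | 1 => half_half | _ => none_all end.
Lemma action_ordK : cancel action_to_ord ord_to_action.
Proof. by case. Qed.
HB.instance Definition _ := Finite.copy action (can_type action_ordK).

Section Scenario.
Variable R : realFieldType.

Definition P1 (o : obs) : R := if o is red then 9 / 10 else 1 / 10.
Definition P2 (o : obs) : R := if o is red then 1 / 10 else 9 / 10.

Definition U1 (a : action) : R :=
  match a with all_none => 30 | half_half => 20 | none_all => 0 end.
Definition U2 (a : action) : R :=
  match a with all_none => 0 | half_half => 20 | none_all => 30 end.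

Definition is_dist (alpha : action -> R) : Prop :=
  (forall a, 0 <= alpha a) /\ \sum_(a : action) alpha a = 1.

(* A (randomized) policy: pi o a = pi(a | o). *)
Definition policy := obs -> action -> R.
Definition is_policy (pi : policy) : Prop := forall o, is_dist (pi o).

(* E^j[U^j | o_1 ; a_1 ~ alpha]  (independent of o_1 here). *)
Definition condEU (U : action -> R) (alpha : action -> R) : R :=
  \sum_(a : action) alpha a * U a.

Definition EU (P : obs -> R) (U : action -> R) (pi : policy) : R :=
  \sum_(o : obs) P o * condEU U (pi o).

Definition in_argmax (r : R) (alpha : action -> R) : Prop :=
  is_dist alpha /\
  forall beta, is_dist beta ->
    r * condEU U1 beta + (1 - r) * condEU U2 beta
      <= r * condEU U1 alpha + (1 - r) * condEU U2 alpha.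

Definition pihat : policy := fun o a =>
  match o with
  | red => if a is all_none then 1 else 0
  | green => if a is none_all then 1 else 0
  end.

End Scenario.

(* Main.v *)
Require Import Defs.
From mathcomp Require Import all_boot all_order all_algebra.
From mathcomp Require Import ring lra.
Import Order.TTheory GRing.Theory Num.Theory.
Local Open Scope ring_scope.
Lemma sum_action (R : realFieldType) (F : action -> R) :
  \sum_(a : action) F a = F all_none + F half_half + F none_all.
Proof.
rewrite (perm_big [:: all_none; half_half; none_all]) /=.
  by rewrite !big_cons big_nil addr0 addrA.
apply: uniq_perm; first exact: index_enum_uniq.
  by [].
by case; rewrite mem_index_enum.
Qed.
Lemma sum_obs (R : realFieldType) (F : obs -> R) :
  \sum_(o : obs) F o = F red + F green.
Proof.
rewrite (perm_big [:: red; green]) /=.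
  by rewrite !big_cons big_nil addr0.
apply: uniq_perm; first exact: index_enum_uniq.
  by [].
by case; rewrite mem_index_enum.
Qed.

Lemma key (R : realFieldType) (r a b c : R) : 0 <= r <= 1 -> 0 <= a -> 0 <= b -> 0 <= c ->
  a + b + c = 1 -> 20 <= r * (a * 30 + b * 20 + c * 0) + (1 - r) * (a * 0 + b * 20 + c * 30) ->
  1/2 <= r -> a * 0 + b * 20 + c * 30 <= 20.
Proof.
move=> /andP[r0 r1] a0 b0 c0 s g rh.
rewrite leNgt; apply/negP => y.
have h1 : 0 <= (1 - r) * a by apply: mulr_ge0; lra.
have hx : a * 30 + b * 20 < 20 by lra.
have h2 : 0 < (3 * r - 1) * (20 - (a * 30 + b * 20)) by apply: mulr_gt0; lra.
nra.
Qed.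

Lemma key' (R : realFieldType) (r a b c : R) : 0 <= r <= 1 -> 0 <= a -> 0 <= b -> 0 <= c ->
  a + b + c = 1 -> 20 <= r * (a * 30 + b * 20 + c * 0) + (1 - r) * (a * 0 + b * 20 + c * 30) ->
  r <= 1/2 -> a * 30 + b * 20 + c * 0 <= 20.
Proof.
move=> /andP[r0 r1] a0 b0 c0 s g rh.
have hr' : 0 <= 1 - r <= 1 by apply/andP; split; lra.
have e : 1 - (1 - r) = r by ring.
have g' : 20 <= (1 - r) * (c * 30 + b * 20 + a * 0) + (1 - (1 - r)) * (c * 0 + b * 20 + a * 30).
  rewrite e; lra.
have := @key R (1 - r) c b a hr' c0 b0 a0 ltac:(lra) g' ltac:(lra).
lra.
Qed.

Lemma half_dist (R : realFieldType) : is_dist (fun a : action => if a is half_half then 1 else 0 : R).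
Proof. split; first by case. by rewrite sum_action /= add0r addr0. Qed.

Theorem proposition2 (R : realFieldType) (r : R) (pi : policy R) :
  0 <= r <= 1 ->
  (forall o : obs, in_argmax r (pi o)) ->
  ~ (forall (o : obs) (a : action), pi o a = pihat R o a) /\
  (EU (@P1 R) (@U1 R) pi < EU (@P1 R) (@U1 R) (pihat R) \/
   EU (@P2 R) (@U2 R) pi < EU (@P2 R) (@U2 R) (pihat R)).
Proof.
move=> hr hopt.
have part2 : (EU (@P1 R) (@U1 R) pi < EU (@P1 R) (@U1 R) (pihat R) \/
   EU (@P2 R) (@U2 R) pi < EU (@P2 R) (@U2 R) (pihat R)).
  have H : forall o, [/\ 0 <= pi o all_none, 0 <= pi o half_half, 0 <= pi o none_all,
      pi o all_none + pi o half_half + pi o none_all = 1 &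
      20 <= r * (pi o all_none * 30 + pi o half_half * 20 + pi o none_all * 0)
         + (1 - r) * (pi o all_none * 0 + pi o half_half * 20 + pi o none_all * 30)].
    move=> o; have [[h0 h1] h2] := hopt o.
    have := h2 _ (half_dist R).
    rewrite /condEU !sum_action /= => h3.
    rewrite sum_action in h1.
    split => //.
    apply: le_trans h3; rewrite le_eqVlt; apply/orP; left; apply/eqP; ring.
  rewrite /EU /condEU !sum_obs !sum_action /P1 /P2 /U1 /U2 /pihat /=.
  have [a1 b1 c1 s1 g1] := H red.
  have [a2 b2 c2 s2 g2] := H green.
  case: (lerP (1/2) r) => rh.
    right.
    have := @key R r _ _ _ hr a1 b1 c1 s1 g1 rh.
    have := @key R r _ _ _ hr a2 b2 c2 s2 g2 rh.
    lra.
  left.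
  have rh' : r <= 1/2 by lra.
  have := @key' R r _ _ _ hr a1 b1 c1 s1 g1 rh'.
  have := @key' R r _ _ _ hr a2 b2 c2 s2 g2 rh'.
  lra.
split => //.
move=> heq.
move: part2; rewrite /EU /condEU !sum_obs !sum_action !heq !ltxx.
by case.
Qed.
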